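(* Let $1\to A\to E\xrightarrow{\pi} G\to 1$ be an extension of groups, let $z\in A$ be a central element of $E$ with $z^2=1$, and let $\bar z:=\pi(z)$. Then there exists a dynamical cocycle $(\alpha,\beta)$ of the symmetric quandle $(\operatorname{Core}(G),\bar z)$ over the family of sets $S=\{S_x\}_{x\in G}$ with $S_x=A$ (the underlying set of $(\operatorname{Core}(A),z)$) for every $x$, such that $(\operatorname{Core}(E),z)$ is isomorphic as a symmetric quandle to $(\operatorname{Core}(G),\bar z)\times_{(\alpha,\beta)}(\operatorname{Core}(A),z)$.
   Context: For a group $H$, the core quandle $\operatorname{Core}(H)$ is the set $H$ with $x*y=yx^{-1}y$. If $c\in H$ is central with $c^2=1$, then $y\mapsto yc$ is a good involution on $\operatorname{Core}(H)$, and the resulting symmetric quandle is denoted $(\operatorname{Core}(H),c)$. Here a quandle is a set with binary operation $*$ such that each $x\mapsto x*y$ is bijective (inverse $x\mapsto x*^{-1}y$), $(x*y)*z=(x*z)*(y*z)$ and $x*x=x$; a good involution is $\rho$ with $\rho^2=\mathrm{id}$, $\rho(x*y)=\rho(x)*y$, $x*\rho(y)=x*^{-1}y$; symmetric quandle homomorphisms preserve $*$ and commute with involutions. A dynamical cocycle of a symmetric quandle $(X,\rho)$ over a family of sets $S=\{S_x\}$ consists of maps $\alpha_{x,y}:S_x\times S_y\to S_{x*y}$, $\beta_x:S_x\to S_{\rho(x)}$ such that for all $x,y,z$, $s\in S_x,t\in S_y,w\in S_z$ (with $\alpha_{x,y}(t)(s):=\alpha_{x,y}(s,t)$): (1) $\alpha_{x,y}(t)$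 is bijective $S_x\to S_{x*y}$; (2) $\alpha_{x*y,z}(\alpha_{x,y}(s,t),w)=\alpha_{x*z,y*z}(\alpha_{x,z}(s,w),\alpha_{y,z}(t,w))$; (3) $\alpha_{\rho(x),y}(\beta_x(s),t)=\beta_{x*y}(\alpha_{x,y}(s,t))$; (4) $\beta_{\rho(x)}\beta_x(s)=s$; (5) $\alpha_{x,\rho(y)}(\beta_y(t))(s)=(\alpha_{x*^{-1}y,y}(t))^{-1}(s)$; (6) $\alpha_{x,x}(s,s)=s$. The extension $X\times_{(\alpha,\beta)}S$ is the set $\{(x,s)\mid x\in X,s\in S_x\}$ with $(x,s)*(y,t)=(x*y,\alpha_{x,y}(s,t))$ and involution $(x,s)\mapsto(\rho(x),\beta_x(s))$. *)

(* Defs.v *)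
From mathcomp Require Import ssreflect ssrfun ssrbool.

Set Implicit Arguments.
Unset Strict Implicit.
Unset Printing Implicit Defensive.

Record Group := {
  gcar :> Type;
  gmul : gcar -> gcar -> gcar;
  ginv : gcar -> gcar;
  gone : gcar;
  gmulA : forall x y z, gmul x (gmul y z) = gmul (gmul x y) z;
  gmul1g : forall x, gmul gone x = x;
  gmulg1 : forall x, gmul x gone = x;
  gmulVg : forall x, gmul (ginv x) x = gone;
  gmulgV : forall x, gmul x (ginv x) = gone
}.

Arguments gmul {g}.
Arguments ginv {g}.
Arguments gone {g}.

Definition is_hom (G H : Group) (f : G -> H) : Prop :=
  forall x y : G, f (gmul x y) = gmul (f x) (f y).

Definition group_extension (A E G : Group) (i : A -> E) (p : E -> G) : Prop :=
  [/\ is_hom i, is_hom p, injective i, (forall g : G, exists e : E, p e = g)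
    & (forall e : E, p e = gone <-> exists a : A, i a = e)].

Definition core_op (H : Group) (x y : H) : H := gmul (gmul y (ginv x)) y.

(* Its inverse operation x *^{-1} y, i.e. the inverse of the bijection
   x |-> x * y.  For Core(H) this map is an involution, so it is again
   y x^{-1} y. *)
Definition core_opinv (H : Group) (x y : H) : H := gmul (gmul y (ginv x)) y.

Definition core_inv (H : Group) (c : H) (y : H) : H := gmul y c.

(* Dynamical cocycle of a symmetric quandle (X, op, rho) (with inverse
   operation opinv) over the CONSTANT family S_x = S for all x (the only
   case needed below).  alpha x y s t = alpha_{x,y}(s,t), beta x s = beta_x(s). *)
Definition dynamical_cocycle (X S : Type) (op opinv : X -> X -> X)
    (rho : X -> X) (alpha : X -> X -> S -> S -> S) (beta : X -> S -> S) : Prop :=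
  (forall x y t, bijective (fun s => alpha x y s t)) /\
      (forall x y z s t w,
                   alpha (op x y) z (alpha x y s t) w
                   = alpha (op x z) (op y z) (alpha x z s w) (alpha y z t w)) /\
      (forall x y s t,
                   alpha (rho x) y (beta x s) t = beta (op x y) (alpha x y s t)) /\
      (forall x s, beta (rho x) (beta x s) = s) /\
      (forall x y s t,
                   (* alpha_{x,rho y}(beta_y t)(s) = (alpha_{x*^-1 y, y}(t))^{-1}(s) *)
                   alpha (opinv x y) y (alpha x (rho y) s (beta y t)) t = s) /\
      (forall x s, alpha x x s s = s).

Definition ext_op (X S : Type) (op : X -> X -> X) (alpha : X -> X -> S -> S -> S)
    (u v : X * S) : X * S :=
  (op u.1 v.1, alpha u.1 v.1 u.2 v.2).

Definition ext_inv (X S : Type) (rho : X -> X) (beta : X -> S -> S)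
    (u : X * S) : X * S :=
  (rho u.1, beta u.1 u.2).

Definition symq_iso (X Y : Type) (opX : X -> X -> X) (rhoX : X -> X)
    (opY : Y -> Y -> Y) (rhoY : Y -> Y) (f : X -> Y) : Prop :=
  [/\ bijective f,
      (forall x y, f (opX x y) = opY (f x) (f y))
    & (forall x, f (rhoX x) = rhoY (f x))].

(* Main.v *)
Require Import Defs.
From mathcomp Require Import ssreflect ssrfun ssrbool.
From Stdlib Require Import ClassicalEpsilon.

Section Transport.
Variables (Q X S : Type) (opQ : Q -> Q -> Q) (rhoQ : Q -> Q)
  (opX opinvX : X -> X -> X) (rhoX : X -> X)
  (f : Q -> X * S) (g : X * S -> Q) (fK : cancel f g) (gK : cancel g f)
  (Hop : forall a b, (f (opQ a b)).1 = opX (f a).1 (f b).1)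
  (Hrho : forall a, (f (rhoQ a)).1 = rhoX (f a).1)
  (Q1 : forall u v, opQ (opQ u v) v = u)
  (Q2 : forall u, opQ u u = u)
  (Q3 : forall u v w, opQ (opQ u v) w = opQ (opQ u w) (opQ v w))
  (Q4 : forall u v, rhoQ (opQ u v) = opQ (rhoQ u) v)
  (Q5 : forall u, rhoQ (rhoQ u) = u)
  (Q6 : forall u v, opQ u (rhoQ v) = opQ u v)
  (X1 : forall x y, opX (opX x y) y = x)
  (X2 : forall x y, opinvX x y = opX x (rhoX y)).

Lemma gE w x : (f w).1 = x -> g (x, (f w).2) = w.
Proof. move=> <-; rewrite -surjective_pairing; exact: fK. Qed.

Lemma g1 x s : (f (g (x, s))).1 = x.
Proof. by rewrite gK. Qed.
Lemma g2 x s : (f (g (x, s))).2 = s.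
Proof. by rewrite gK. Qed.

Definition alpha x y s t := (f (opQ (g (x, s)) (g (y, t)))).2.
Definition beta x s := (f (rhoQ (g (x, s)))).2.

Lemma galpha x y s t : g (opX x y, alpha x y s t) = opQ (g (x, s)) (g (y, t)).
Proof. apply: gE; by rewrite Hop !g1. Qed.
Lemma gbeta x s : g (rhoX x, beta x s) = rhoQ (g (x, s)).
Proof. apply: gE; by rewrite Hrho !g1. Qed.

Lemma transport :
  exists (alpha : X -> X -> S -> S -> S) (beta : X -> S -> S), dynamical_cocycle opX opinvX rhoX alpha beta /\
   exists f : Q -> X * S, symq_iso opQ rhoQ (ext_op opX alpha) (ext_inv rhoX beta) f.
Proof.
exists alpha, beta; split.
  split; [|split; [|split; [|split; [|split]]]].
  - move=> x y t.
    exists (fun s' => (f (opQ (g (opX x y, s')) (g (y, t)))).2).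
      move=> s; by rewrite /alpha galpha Q1 g2.
    move=> s'. rewrite /alpha gE; first by rewrite Q1 gK.
    by rewrite Hop !g1 X1.
  - move=> x y z s t w. rewrite [LHS]/alpha [RHS]/alpha !galpha Q3 //.
  - move=> x y s t. rewrite [LHS]/alpha [RHS]/beta. rewrite (gbeta x s) (galpha x y s t) Q4 //.
  - move=> x s. by rewrite [LHS]/beta gbeta Q5 g2.
  - move=> x y s t. rewrite [LHS]/alpha X2 galpha gbeta Q6 Q1. by rewrite g2.
  - move=> x s. by rewrite /alpha Q2 g2.
exists f; split.
- by exists g.
- move=> a b. rewrite /ext_op /alpha -!surjective_pairing !fK. by rewrite [f (opQ a b)]surjective_pairing Hop.
- move=> a. rewrite /ext_inv /beta -!surjective_pairing !fK. by rewrite [f (rhoQ a)]surjective_pairing Hrho.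
Qed.
End Transport.

Section GroupLemmas.
Variable H : Group.
Implicit Types x y z u v w : H.

Lemma mulKV x y : gmul x (gmul (ginv x) y) = y.
Proof. by rewrite gmulA gmulgV gmul1g. Qed.
Lemma mulVK x y : gmul (ginv x) (gmul x y) = y.
Proof. by rewrite gmulA gmulVg gmul1g. Qed.
Lemma mulIg x y z : gmul x y = gmul x z -> y = z.
Proof. move=> e. by rewrite -(mulVK x y) e mulVK. Qed.
Lemma invM x y : ginv (gmul x y) = gmul (ginv y) (ginv x).
Proof.
apply: (@mulIg (gmul x y)). rewrite gmulgV -gmulA mulKV gmulgV //.
Qed.
Lemma invK x : ginv (ginv x) = x.
Proof. apply: (@mulIg (ginv x)). by rewrite gmulgV gmulVg. Qed.
Lemma inv1 : ginv (@gone H) = gone.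
Proof. apply: (@mulIg gone). by rewrite gmulgV gmul1g. Qed.

Ltac gs := do 4 (rewrite -?gmulA ?mulKV ?mulVK ?gmulgV ?gmulVg ?gmulg1 ?gmul1g //).

Variable c : H.
Hypothesis hc : forall e, gmul c e = gmul e c.
Hypothesis hc2 : gmul c c = gone.

Lemma invc : ginv c = c.
Proof. apply: (@mulIg c). by rewrite gmulgV hc2. Qed.

Lemma cQ1 u v : core_op (core_op u v) v = u.
Proof.
rewrite /core_op !invM !invK; gs.
Qed.
Lemma cQ2 u : core_op u u = u.
Proof. by rewrite /core_op gmulgV gmul1g. Qed.
Lemma cQ3 u v w : core_op (core_op u v) w = core_op (core_op u w) (core_op v w).
Proof.
rewrite /core_op !invM !invK; gs.
Qed.
Lemma cQ4 u v : core_inv c (core_op u v) = core_op (core_inv c u) v.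
Proof.
rewrite /core_op /core_inv !invM invc -!gmulA.
by rewrite [gmul c _]hc -!gmulA.
Qed.
Lemma cQ5 u : core_inv c (core_inv c u) = u.
Proof. by rewrite /core_inv -gmulA hc2 gmulg1. Qed.
Lemma cQ6 u v : core_op u (core_inv c v) = core_op u v.
Proof.
rewrite /core_op /core_inv ?invM -!gmulA.
by rewrite [gmul c _]hc -!gmulA hc2 gmulg1.
Qed.
End GroupLemmas.

Lemma hom1 (G H : Group) (f : G -> H) : is_hom f -> f gone = gone.
Proof.
move=> hf. apply: (@mulIg _ (f gone)). by rewrite -hf !gmulg1.
Qed.
Lemma homV (G H : Group) (f : G -> H) : is_hom f -> forall x, f (ginv x) = ginv (f x).
Proof.
move=> hf x. apply: (@mulIg _ (f x)). by rewrite -hf !gmulgV hom1.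
Qed.

Theorem corollary5p3 (A E G : Group) (i : A -> E) (p : E -> G)
  (hext : group_extension i p)
  (z : A) (hzc : forall e : E, gmul (i z) e = gmul e (i z))
  (hz2 : gmul z z = gone) :
  let zbar := p (i z) in
  exists (alpha : G -> G -> A -> A -> A) (beta : G -> A -> A),
    dynamical_cocycle (@core_op G) (@core_opinv G) (core_inv zbar) alpha beta /\
    exists f : E -> G * A,
      symq_iso (@core_op E) (core_inv (i z))
               (ext_op (@core_op G) alpha) (ext_inv (core_inv zbar) beta) f.
Proof.
move=> zbar.
case: hext => hi hp iinj psurj pker.
have iz2 : gmul (i z) (i z) = gone by rewrite -hi hz2 hom1.
have zc : forall e, gmul zbar e = gmul e zbar.
  move=> e; case: (psurj e) => e' <-. by rewrite /zbar -!hp hzc.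
have zc2 : gmul zbar zbar = gone by rewrite /zbar -hp iz2 hom1.
pose s := fun x : G => proj1_sig (constructive_indefinite_description _ (psurj x)).
have sP : forall x, p (s x) = x.
  move=> x; rewrite /s; by case: constructive_indefinite_description.
pose j := fun e : E => epsilon (inhabits (@gone A)) (fun a => i a = e).
have jP : forall e, p e = gone -> i (j e) = e.
  move=> e /pker he. rewrite /j. exact: (epsilon_spec (inhabits gone) (fun a => i a = e) he).
pose f := fun e : E => (p e, j (gmul (ginv (s (p e))) e)).
pose g := fun u : G * A => gmul (s u.1) (i u.2).
have pi1 : forall a, p (i a) = gone by move=> a; apply/pker; exists a.
have fK : cancel f g.
  move=> e; rewrite /f /g /= jP ?mulKV //.
  by rewrite hp homV // sP gmulVg.
have gK : cancel g f.
  case=> x a; rewrite /f /g /= hp pi1 gmulg1 sP mulVK.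
  congr pair. apply: iinj. apply: jP. exact: pi1.
apply: (@transport E G A _ _ _ _ _ f g fK gK).
- move=> a b. by rewrite /f /= /core_op !hp homV.
- move=> a. by rewrite /f /= /core_inv hp.
- exact: cQ1.
- exact: cQ2.
- exact: cQ3.
- exact: cQ4.
- exact: cQ5.
- exact: cQ6.
- exact: cQ1.
- move=> x y. rewrite /core_opinv. symmetry. exact: cQ6.
Qed.
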